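(* Let $v,\Delta$ be nonnegative integers with $v+\Delta\le4$. Then for every $0<\lambda\le1$, $\varPhi_{v,\Delta}(\lambda)\le(1+4\lambda+6\lambda^2)^{v/4}$.
   Context: For nonnegative integers $v,\Delta$ and $0<\lambda\le 1$, the local factor is \[ \varPhi_{v,\Delta}(\lambda)=\frac{\sum_{t=0}^v\binom vt\lambda^{\min\{t,\,\Delta+v-t\}}}{1+\lambda^{\Delta}}. \] *)

(* Defs.v *)
From Stdlib Require Import Reals Lra Lia Arith.
Open Scope R_scope.

(* Local factor Phi_{v,Delta}(lambda) =
   (sum_{t=0}^v C(v,t) lambda^{min(t, Delta+v-t)}) / (1 + lambda^Delta).
   Note Delta+v-t >= 0 for t <= v, so nat subtraction is exact. *)
Definition Phi (v Delta : nat) (lam : R) : R :=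
  sum_f_R0 (fun t => C v t * lam ^ (Nat.min t (Delta + v - t))) v
  / (1 + lam ^ Delta).

(* Main.v *)
Require Import Defs.
From Stdlib Require Import Reals Lra Lia.
Open Scope R_scope.
Lemma key (a P : R) (v : nat) : 0 < a -> 0 < P -> a ^ 4 <= P ^ v -> a <= Rpower P (INR v / 4).
Proof.
  intros Ha HP H.
  assert (E1 : a = Rpower (a^4) (/4)).
  { unfold Rpower. rewrite ln_pow by lra. replace (/4 * (INR 4 * ln a)) with (ln a) by (simpl; field).
    now rewrite exp_ln. }
  assert (E2 : Rpower P (INR v / 4) = Rpower (P^v) (/4)).
  { unfold Rpower. rewrite ln_pow by lra. f_equal. field. }
  rewrite E2, E1 at 1. apply Rle_Rpower_l; [lra|split; [apply pow_lt; lra| exact H]].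
Qed.
Lemma key' (n d P : R) (v : nat) : 0 < n -> 0 < d -> 0 < P -> n^4 <= P^v * d^4 -> n / d <= Rpower P (INR v / 4).
Proof.
  intros Hn Hd HP H. apply key; auto.
  - apply Rdiv_lt_0_compat; auto.
  - replace ((n/d)^4) with (n^4 * / d^4) by (field; lra).
    apply (Rmult_le_reg_r (d^4)); [apply pow_lt; lra|].
    rewrite Rmult_assoc, Rinv_l by (apply pow_nonzero; lra). lra.
Qed.
Ltac cs N :=
  unfold Phi;
  match goal with |- ?A / _ <= _ => replace A with N by (unfold C; simpl; field) end;
  apply key'; [nra|nra|nra|simpl; nra].
Goal forall l, 0 < l -> l <= 1 -> Phi 1 0 l <= Rpower (1 + 4 * l + 6 * l ^ 2) (INR 1 / 4). intros l H0 H1. cs 2. Qed.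
Goal forall l, 0 < l -> l <= 1 -> Phi 1 1 l <= Rpower (1 + 4 * l + 6 * l ^ 2) (INR 1 / 4). intros l H0 H1. cs (1+l). Qed.
Theorem lemma12 (v Delta : nat) (lam : R) :
  (v + Delta <= 4)%nat -> 0 < lam -> lam <= 1 ->
  Phi v Delta lam <= Rpower (1 + 4 * lam + 6 * lam ^ 2) (INR v / 4).
Proof.
  intros Hv H0 H1.
  destruct v as [|[|[|[|[|v]]]]]; destruct Delta as [|[|[|[|[|D]]]]];
    try (exfalso; lia).
  all: try first [ cs 1 | cs 2 | cs (1+lam) | cs (2+2*lam) | cs (1+3*lam) | cs (1+2*lam+lam^2) | cs (2+6*lam) | cs (1+4*lam+3*lam^2) | cs (2+8*lam+6*lam^2) ].
  unfold Phi; replace (sum_f_R0 _ 0) with 1 by (simpl; unfold C; simpl; field).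
  apply key'; [lra|nra|nra|]. simpl. assert (0 < lam*(lam*(lam*1))) by (apply Rmult_lt_0_compat; nra). nra.
Qed.
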